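(* Let $\mathcal M=(M,<,+,0,\ldots)$ be a definably complete locally o-minimal expansion of an ordered group. Let $f:(X,\tau_X)\to(Y,\tau_Y)$ be a definably closed definable continuous map between definable topological spaces such that $f^{-1}(y)$ is definably compact for every $y\in Y$. Then $f$ is definably proper.
   Context: ''Definable'' means definable in $\mathcal M$ with parameters. $\mathcal M$ is an expansion of an ordered group with dense order without endpoints; locally o-minimal: for every definable $Z\subseteq M$ and $a\in M$ there is an open interval $I\ni a$ with $Z\cap I$ a finite union of points and open intervals; definably complete: every definable subset of $M$ has sup and inf in $M\cup\{\pm\infty\}$. A definable topological space is a definable set with a topology having a definable family as open base. A definable subset is definably compact if, with the relative topology, every definable filtered family (any two members contain a common member) of nonempty closed subsets has nonempty intersection. $f$ is definably closed if $f(C)$ is closed for every definable closed $C\subseteq X$, and definably proper if $f^{-1}(C)$ is definably compact for every definably compact definable $C\subseteq Y$. *)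

(* Defs.v *)
From Stdlib Require Import List.
From mathcomp Require Import all_boot all_algebra.
Set Implicit Arguments. Unset Strict Implicit. Unset Printing Implicit Defensive.
Import GRing.Theory.
Local Open Scope ring_scope.

Notation pset T := (T -> Prop).

Definition vjoin (M : Type) (n m : nat) (x : 'I_n -> M) (y : 'I_m -> M)
  : 'I_(n + m) -> M :=
  fun k => match split k with inl i => x i | inr j => y j end.
Definition vleft (M : Type) (n m : nat) (z : 'I_(n + m) -> M) : 'I_n -> M :=
  fun i => z (lshift m i).
Definition vright (M : Type) (n m : nat) (z : 'I_(n + m) -> M) : 'I_m -> M :=
  fun j => z (rshift n j).

Record dense_ordered_group (M : zmodType) (lt : M -> M -> Prop) : Prop := {
  og_irrefl : forall x, ~ lt x x;
  og_trans : forall x y z, lt x y -> lt y z -> lt x z;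
  og_total : forall x y, lt x y \/ x = y \/ lt y x;
  og_add : forall x y z, lt x y -> lt (x + z) (y + z);
  og_dense : forall x y, lt x y -> exists z, lt x z /\ lt z y;
  og_noleft : forall x, exists y, lt y x;
  og_noright : forall x, exists y, lt x y }.

(* def n A  means: A ⊆ M^n is definable (with parameters) in the expansion.
   The collection of definable sets of an expansion of (M,<,+,0) is exactly a
   family of Boolean algebras closed under products, projections, containing
   the diagonals, the singletons (parameters), and the graphs of < and +
   (van den Dries' notion of a structure).  Closure under reindexing of
   coordinates is derivable from these and is included for convenience. *)
Record expansion (M : zmodType) (lt : M -> M -> Prop)
    (def : forall n, pset ('I_n -> M) -> Prop) : Prop := {
  def_setT : forall n, def n (fun _ => True);
  def_compl : forall n A, def n A -> def n (fun x => ~ A x);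
  def_union : forall n A B, def n A -> def n B -> def n (fun x => A x \/ B x);
  def_prod : forall n m A B, def n A -> def m B ->
     def (n + m) (fun z => A (vleft z) /\ B (vright z));
  def_proj : forall n m A, def (n + m) A ->
     def n (fun x => exists y : 'I_m -> M, A (vjoin x y));
  def_diag : forall n (i j : 'I_n), def n (fun x => x i = x j);
  def_reindex : forall n m (g : 'I_m -> 'I_n) A, def m A ->
     def n (fun x => A (fun i => x (g i)));
  def_const : forall a : M, def 1 (fun x => x ord0 = a);
  def_lt : def 2 (fun x => lt (x ord0) (x (Ordinal (isT : 1 < 2)%N)));
  def_add : def 3 (fun x => x ord0 + x (Ordinal (isT : 1 < 3)%N)
                             = x (Ordinal (isT : 2 < 3)%N)) }.

Definition to1 (M : Type) (Z : pset ('I_1 -> M)) : pset M := fun x => Z (fun _ => x).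

Definition locally_o_minimal (M : zmodType) (lt : M -> M -> Prop)
    (def : forall n, pset ('I_n -> M) -> Prop) : Prop :=
  forall Z, def 1%N Z -> forall a : M,
    exists l u, lt l a /\ lt a u /\
      exists (ps : seq M) (ivs : seq (M * M)),
        forall x, (to1 Z x /\ lt l x /\ lt x u) <->
          (List.In x ps \/ exists p q, List.In (p, q) ivs /\ lt p x /\ lt x q).

Definition is_lub (M : Type) (lt : M -> M -> Prop) (Z : pset M) (s : M) :=
  (forall z, Z z -> ~ lt s z) /\ (forall b, (forall z, Z z -> ~ lt b z) -> ~ lt b s).
Definition is_glb (M : Type) (lt : M -> M -> Prop) (Z : pset M) (s : M) :=
  (forall z, Z z -> ~ lt z s) /\ (forall b, (forall z, Z z -> ~ lt z b) -> ~ lt s b).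

(* every definable subset of M has sup and inf in M ∪ {±oo}: i.e. nonempty
   bounded-above (resp. below) definable sets have a sup (resp. inf) in M *)
Definition definably_complete (M : zmodType) (lt : M -> M -> Prop)
    (def : forall n, pset ('I_n -> M) -> Prop) : Prop :=
  forall Z, def 1%N Z ->
    ((exists z, to1 Z z) -> (exists b, forall z, to1 Z z -> ~ lt b z) ->
       exists s, is_lub lt (to1 Z) s) /\
    ((exists z, to1 Z z) -> (exists b, forall z, to1 Z z -> ~ lt z b) ->
       exists s, is_glb lt (to1 Z) s).

(* A definable topological space: a definable X ⊆ M^n with a topology having
   the definable family {B_c : c ∈ C} (C ⊆ M^k) as open base. *)
Record DTop (M : zmodType) (def : forall n, pset ('I_n -> M) -> Prop) (n : nat) := {
  dt_pts : pset ('I_n -> M);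
  dt_k : nat;
  dt_idx : pset ('I_dt_k -> M);
  dt_base : pset ('I_(dt_k + n) -> M);
  dt_pts_def : def n dt_pts;
  dt_idx_def : def dt_k dt_idx;
  dt_base_def : def (dt_k + n) dt_base;
  dt_base_sub : forall c x, dt_idx c -> dt_base (vjoin c x) -> dt_pts x;
  dt_base_cover : forall x, dt_pts x -> exists c, dt_idx c /\ dt_base (vjoin c x);
  dt_base_inter : forall c d x, dt_idx c -> dt_idx d ->
     dt_base (vjoin c x) -> dt_base (vjoin d x) ->
     exists e, dt_idx e /\ dt_base (vjoin e x) /\
       forall y, dt_base (vjoin e y) -> dt_base (vjoin c y) /\ dt_base (vjoin d y) }.

Arguments dt_pts {M def n} _ _.
Arguments dt_k {M def n} _.
Arguments dt_idx {M def n} _ _.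
Arguments dt_base {M def n} _ _.

Section Topo.
Variables (M : zmodType) (def : forall n, pset ('I_n -> M) -> Prop) (n : nat).
Variable S : DTop def n.

Definition bopen (c : 'I_(dt_k S) -> M) : pset ('I_n -> M) :=
  fun x => dt_base S (vjoin c x).

Definition open_in (U : pset ('I_n -> M)) : Prop :=
  (forall x, U x -> dt_pts S x) /\
  forall x, U x -> exists c, dt_idx S c /\ bopen c x /\ forall y, bopen c y -> U y.

Definition closed_rel (K A : pset ('I_n -> M)) : Prop :=
  (forall x, A x -> K x) /\
  forall x, K x ->
    (forall c, dt_idx S c -> bopen c x -> exists y, bopen c y /\ A y) -> A x.

Definition closed_in (A : pset ('I_n -> M)) : Prop := closed_rel (dt_pts S) A.

Definition dcompact (K : pset ('I_n -> M)) : Prop :=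
  (forall x, K x -> dt_pts S x) /\
  forall (k : nat) (C : pset ('I_k -> M)) (F : pset ('I_(k + n) -> M)),
    @def k C -> @def (k + n) F -> (exists c, C c) ->
    (forall c, C c -> (exists x, F (vjoin c x)) /\ closed_rel K (fun x => F (vjoin c x))) ->
    (forall c d, C c -> C d -> exists e, C e /\
        forall x, F (vjoin e x) -> F (vjoin c x) /\ F (vjoin d x)) ->
    exists x, forall c, C c -> F (vjoin c x).
End Topo.

Section Maps.
Variables (M : zmodType) (def : forall n, pset ('I_n -> M) -> Prop) (n m : nat).
Variables (X : DTop def n) (Y : DTop def m) (f : ('I_n -> M) -> ('I_m -> M)).

Definition dpreim (B : pset ('I_m -> M)) : pset ('I_n -> M) :=
  fun x => dt_pts X x /\ B (f x).
Definition dimg (A : pset ('I_n -> M)) : pset ('I_m -> M) :=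
  fun y => exists x, A x /\ f x = y.

Definition definable_map : Prop :=
  (forall x, dt_pts X x -> dt_pts Y (f x)) /\
  @def (n + m) (fun z => dt_pts X (vleft z) /\ f (vleft z) = vright z).

Definition continuous_map : Prop :=
  forall U, open_in Y U -> open_in X (dpreim U).

Definition definably_closed_map : Prop :=
  forall A, @def n A -> closed_in X A -> closed_in Y (dimg A).

Definition definably_proper : Prop :=
  forall C, @def m C -> (forall y, C y -> dt_pts Y y) -> dcompact Y C ->
    dcompact X (dpreim C).
End Maps.

Arguments dpreim {M def n m} X f B _.
Arguments dimg {M n m} f A _.

(* Main.v *)
Require Import Defs.
From mathcomp Require Import all_boot all_algebra.
From Stdlib Require Import Classical FunctionalExtensionality PropExtensionality.
Set Implicit Arguments. Unset Strict Implicit. Unset Printing Implicit Defensive.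

Section Help.
Variables (M : zmodType) (lt : M -> M -> Prop) (def : forall n, pset ('I_n -> M) -> Prop).
Hypothesis Hexp : expansion lt def.

Lemma vleftJ n m (x : 'I_n -> M) (y : 'I_m -> M) : vleft (vjoin x y) = x.
Proof.
apply: functional_extensionality => i; rewrite /vleft /vjoin.
by rewrite (unsplitK (inl _ i)).
Qed.

Lemma vrightJ n m (x : 'I_n -> M) (y : 'I_m -> M) : vright (vjoin x y) = y.
Proof.
apply: functional_extensionality => i; rewrite /vright /vjoin.
by rewrite (unsplitK (inr _ i)).
Qed.

Lemma def_ext n (A B : pset ('I_n -> M)) : @def n A -> (forall x, A x <-> B x) -> @def n B.
Proof.
move=> h e; have -> : B = A; last by [].
apply: functional_extensionality => x; apply: propositional_extensionality.
by split; apply e.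
Qed.

Lemma def_and n (A B : pset ('I_n -> M)) : @def n A -> @def n B -> @def n (fun x => A x /\ B x).
Proof.
move=> hA hB.
apply: (def_ext (def_compl Hexp (def_union Hexp (def_compl Hexp hA) (def_compl Hexp hB)))).
move=> x; split.
- move=> h; split; apply: NNPP => H; apply: h; tauto.
- tauto.
Qed.

Lemma def_not n (A : pset ('I_n -> M)) : @def n A -> @def n (fun x => ~ A x).
Proof. exact: (def_compl Hexp). Qed.

Lemma def_ex n m (A : pset ('I_(n + m) -> M)) (B : pset ('I_n -> M)) :
  @def (n + m) A -> (forall x, B x <-> exists y, A (vjoin x y)) -> @def n B.
Proof. by move=> h e; apply: (def_ext (def_proj Hexp h)) => x; rewrite e. Qed.

Lemma def_ri n m (g : 'I_m -> 'I_n) (A : pset ('I_m -> M)) :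
  @def m A -> @def n (fun x => A (fun i => x (g i))).
Proof. exact: (def_reindex Hexp). Qed.

Lemma def_join N p q (A : pset ('I_(p + q) -> M)) (ga : 'I_p -> 'I_N) (gb : 'I_q -> 'I_N) :
  @def (p + q) A -> @def N (fun w => A (vjoin (fun a => w (ga a)) (fun b => w (gb b)))).
Proof.
move=> h.
pose g := fun i : 'I_(p + q) => match split i with inl a => ga a | inr b => gb b end.
apply: (def_ext (def_ri g h)) => w.
have -> : (fun i => w (g i)) = vjoin (fun a => w (ga a)) (fun b => w (gb b)); last by [].
apply: functional_extensionality => i; rewrite /g /vjoin; by case: (split i).
Qed.

Lemma def_pt k (c : 'I_k -> M) : @def k (fun x => x = c).
Proof.
have H : forall s : seq 'I_k, @def k (fun x => forall i, i \in s -> x i = c i).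
  elim=> [|i s IH].
    by apply: (def_ext (def_setT Hexp k)) => x; split => // _ i; rewrite in_nil.
  have hi : @def k (fun x => x i = c i).
    exact: (def_ri (fun _ : 'I_1 => i) (def_const Hexp (c i))).
  apply: (def_ext (def_and hi IH)) => x; split.
    move=> [h1 h2] j; rewrite in_cons => /orP [/eqP -> //| /h2 //].
  move=> h; split; first by apply: h; rewrite mem_head.
  by move=> j js; apply: h; rewrite in_cons js orbT.
apply: (def_ext (H (enum 'I_k))) => x; split.
  by move=> h; apply: functional_extensionality => i; apply: h; rewrite mem_enum.
by move=> -> .
Qed.

Lemma def_subst_r n k (c : 'I_k -> M) (A : pset ('I_(n + k) -> M)) :
  @def (n + k) A -> @def n (fun x => A (vjoin x c)).
Proof.
move=> h.
have hB : @def (n + k) (fun w => A w /\ vright w = c).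
  apply: def_and => //; exact: (def_ri (@rshift n k) (def_pt c)).
apply: (def_ex hB) => x; split.
  by move=> hx; exists c; rewrite vrightJ.
by move=> [y]; rewrite vrightJ => [[hy <-]].
Qed.

Lemma def_subst_l n k (c : 'I_k -> M) (A : pset ('I_(k + n) -> M)) :
  @def (k + n) A -> @def n (fun x => A (vjoin c x)).
Proof.
move=> h.
have h' := def_join (@rshift n k) (@lshift n k) h.
apply: (def_ext (def_subst_r c h')) => x.
by have := vleftJ x c; have := vrightJ x c; rewrite /vleft /vright => -> ->.
Qed.

End Help.

Theorem lemma4p11 (M : zmodType) (lt : M -> M -> Prop)
  (def : forall n, pset ('I_n -> M) -> Prop)
  (Hog : dense_ordered_group lt) (Hexp : expansion lt def)
  (Hlom : locally_o_minimal lt def) (Hdc : definably_complete lt def)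
  (n m : nat) (X : DTop def n) (Y : DTop def m) (f : ('I_n -> M) -> ('I_m -> M))
  (Hdef : definable_map X Y f) (Hcont : continuous_map X Y f)
  (Hclosed : definably_closed_map X Y f)
  (Hfib : forall y, dt_pts Y y -> dcompact X (dpreim X f (fun z => z = y))) :
  definably_proper X Y f.
Proof.
move=> C defC CY [_ Ccomp]; split; first by move=> x [].
move=> k C' F defC' defF [c0 Cc0] Hne Hfilt.
have HFC : forall c, C' c -> forall x, F (vjoin c x) -> dt_pts X x /\ C (f x).
  by move=> c Cc x hx; have [_ [h _]] := Hne c Cc; exact: h.
pose G : pset ('I_(k + m) -> M) := fun z =>
  exists x, F (vjoin (vleft z) x) /\ dt_pts X x /\ f x = vright z.
have GE : forall c y, G (vjoin c y) <-> exists x, F (vjoin c x) /\ dt_pts X x /\ f x = y.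
  by move=> c y; rewrite /G vleftJ vrightJ.
have defG : @def (k + m) G.
  have hA : @def ((k + m) + n) (fun w => F (vjoin (vleft (vleft w)) (vright w)) /\
        (dt_pts X (vleft (vjoin (vright w) (vright (vleft w)))) /\
         f (vleft (vjoin (vright w) (vright (vleft w)))) = vright (vjoin (vright w) (vright (vleft w))))).
    apply: (def_and Hexp) => //.
      by apply: (def_ext (def_join Hexp (fun a => lshift n (lshift m a)) (@rshift (k + m) n) defF)).
    by apply: (def_ext (def_join Hexp (@rshift (k + m) n) (fun b => lshift n (rshift k b)) Hdef.2)) => w; rewrite vleftJ vrightJ.
  apply: (def_ex Hexp hA) => z; rewrite /G.
  by split => -[x hx]; exists x; move: hx; rewrite !vleftJ !vrightJ.
have [y Hy] : exists y, forall c, C' c -> G (vjoin c y).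
  apply: (Ccomp k C' G defC' defG); first by exists c0.
  - move=> c Cc.
    pose Fc := fun z => F (vjoin c z).
    have defFc : @def n Fc by exact: (def_subst_l Hexp c defF).
    pose E : pset ('I_(dt_k X) -> M) :=
      fun c' => exists z, dt_base X (vjoin c' z) /\ Fc z.
    have defE : @def (dt_k X) E.
      have hT : @def (dt_k X + n) (fun w => dt_base X w /\ Fc (vright w)).
        apply: (def_and Hexp); first exact: dt_base_def.
        exact: (def_ri Hexp (@rshift (dt_k X) n) defFc).
      apply: (def_ex Hexp hT) => c'; rewrite /E.
      by split => -[z hz]; exists z; move: hz; rewrite vrightJ.
    pose Cl := fun x => dt_pts X x /\ forall c', dt_idx X c' -> bopen (S:=X) c' x ->
        exists z, bopen (S:=X) c' z /\ Fc z.
    have defCl : @def n Cl.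
      apply: (def_and Hexp); first exact: dt_pts_def.
      have hQ : @def (n + dt_k X) (fun w => dt_idx X (vright w) /\
          (dt_base X (vjoin (vright w) (vleft w)) /\ ~ E (vright w))).
        apply: (def_and Hexp); first exact: (def_ri Hexp (@rshift n (dt_k X)) (dt_idx_def X)).
        apply: (def_and Hexp).
          exact: (def_join Hexp (@rshift n (dt_k X)) (@lshift n (dt_k X)) (dt_base_def X)).
        exact: (def_ri Hexp (@rshift n (dt_k X)) (def_not Hexp defE)).
      apply: (def_ext (def_not Hexp (def_ex Hexp hQ (fun x => iff_refl _)))) => x.
      split.
        move=> H c' hc' hb; apply: NNPP => H3; apply: H; exists c'.
        by rewrite vleftJ vrightJ; split.
      move=> H [c' []]; rewrite vleftJ vrightJ => hc' [hb hE]; apply: hE.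
      exact: H.
    have clCl : closed_in X Cl.
      split; first by move=> x [].
      move=> x px H; split => // c' hc' hb.
      have [z [hz [_ Hz]]] := H c' hc' hb.
      exact: Hz.
    have Himg := Hclosed Cl defCl clCl.
    split.
      have [x hx] := (Hne c Cc).1.
      exists (f x); apply/GE; exists x; split => //; split => //.
      by have [] := HFC c Cc x hx.
    split.
      move=> y' /GE [x [hx [_ <-]]]; by have [] := HFC c Cc x hx.
    move=> y' Cy' Had; apply/GE.
    have : dimg f Cl y'.
      apply: Himg.2; first exact: CY.
      move=> c' hc' hb; have [y2 [hb2 /GE [x [hx [px ex]]]]] := Had c' hc' hb.
      exists y2; split => //; exists x; split => //; split => //.
      by move=> c'' _ hb''; exists x.
    move=> [x [[px Hx] ex]].
    exists x; split => //.
    apply: (Hne c Cc).2.2; first by split => //; rewrite ex.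
    exact: Hx.
  - move=> c d Cc Cd; have [e [Ce He]] := Hfilt c d Cc Cd.
    exists e; split => // y' /GE [x [hx [px ex]]].
    by have [h1 h2] := He x hx; split; apply/GE; exists x.
have Cy : C y.
  by have /GE [x [hx [_ <-]]] := Hy c0 Cc0; have [] := HFC c0 Cc0 x hx.
have [_ Hfc] := Hfib y (CY y Cy).
pose F' : pset ('I_(k + n) -> M) := fun w => F w /\ (dt_pts X (vright w) /\ f (vright w) = y).
have defF' : @def (k + n) F'.
  apply: (def_and Hexp) => //.
  have hfib : @def n (fun x => dt_pts X x /\ f x = y).
    apply: (def_ext (def_subst_r Hexp y Hdef.2)) => x.
    by rewrite vleftJ vrightJ.
  by apply: (def_ext (def_ri Hexp (@rshift k n) hfib)) => w.
have FE : forall c x, F' (vjoin c x) <-> F (vjoin c x) /\ dt_pts X x /\ f x = y.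
  by move=> c x; rewrite /F' vrightJ.
have [x Hx] : exists x, forall c, C' c -> F' (vjoin c x).
  apply: (Hfc k C' F' defC' defF' (ex_intro _ c0 Cc0)).
- move=> c Cc; split.
    have /GE [x [hx [px ex]]] := Hy c Cc.
    by exists x; apply/FE; split => //; split.
  split.
    by move=> x /FE [hx [px ex]]; split.
  move=> x [px ex] Had; apply/FE; split; last by split.
  apply: (Hne c Cc).2.2; first by split => //; rewrite ex.
  move=> c' hc' hb; have [z [hz /FE [Fz _]]] := Had c' hc' hb.
  by exists z.
- move=> c d Cc Cd; have [e [Ce He]] := Hfilt c d Cc Cd.
  exists e; split => // x /FE [hx [px ex]].
  by have [h1 h2] := He x hx; split; apply/FE; split => //; split.
exists x => c Cc; by have /FE [] := Hx c Cc.
Qed.
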